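(* Fix $\nu>0$. (a) $L(\nu/\mu,\mu)\to E(\nu)$ as $\mu\to\infty$, and $\mathrm{L}(\nu/\lambda,\lambda)\to E(\nu)$ as $\lambda\to\infty$. (b) $\mathrm{Ssi}(\nu/\lambda,\lambda)\to\mathrm{Si}(\nu)$ as $\lambda\to\infty$. (c) $\lambda\,\mathrm{Eci}(\nu/\lambda,\lambda)\to i(1-e^{i\nu})$ as $\lambda\to\infty$.
   Context: $L(x,\mu)=\sum_{k=1}^\infty \frac{e^{ikx}}{k+\mu}$; $\mathrm{L}(x,\lambda)=e^{-ix}L\left(2x,\frac{\lambda-1}{2}\right)$; $E(t)=\int_0^\infty\frac{e^{iu}}{u+t}\,du$ for $t>0$; $\mathrm{Si}(t)=\int_0^t\frac{\sin u}{u}\,du$; $\mathrm{Ssi}(x,\lambda)=\int_0^x\frac{\sin\lambda t}{\sin t}\,dt$; $\mathrm{Eci}(x,\lambda)=\int_0^x\frac{e^{it\lambda}}{\cos t}\,dt$. *)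

(* Defs.v *)
From Stdlib Require Import Reals.
From Coquelicot Require Export Coquelicot.
Open Scope R_scope.

Definition cis (t : R) : C := (cos t, sin t).

(* L(x,mu) = sum_{k>=1} e^{ikx}/(k+mu), the (conditionally convergent) series,
   as the limit of its partial sums sum_{k=1}^{n+1}. *)
Definition L_term (x mu : R) (k : nat) : C :=
  Cdiv (cis (INR k * x)) (RtoC (INR k + mu)).
Definition L (x mu : R) : C :=
  @lim C_R_CompleteNormedModule
    (filtermap (fun n : nat => sum_n (fun k => L_term x mu (S k)) n) eventually).

Definition Lrm (x lam : R) : C := Cmult (cis (- x)) (L (2 * x) ((lam - 1) / 2)).

Definition E (t : R) : C :=
  @RInt_gen C_R_CompleteNormedModule (fun u => Cdiv (cis u) (RtoC (u + t)))
    (at_point 0) (Rbar_locally p_infty).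

Definition Si (t : R) : R := RInt (fun u => sin u / u) 0 t.

Definition Ssi (x lam : R) : R := RInt (fun t => sin (lam * t) / sin t) 0 x.

Definition Eci (x lam : R) : C :=
  @RInt C_R_CompleteNormedModule (fun t => Cdiv (cis (t * lam)) (RtoC (cos t))) 0 x.

(* Main.v *)
Require Import Defs.
From Stdlib Require Import Reals Lra Lia ZArith.
From Coquelicot Require Import Coquelicot.
Open Scope R_scope.

Lemma sin_bounds a : 0 <= a <= 1 -> a - a^3/6 <= sin a <= a.
Proof.
  intros Ha. destruct (pre_sin_bound a 0 ltac:(lra) ltac:(lra)) as [H1 H2].
  unfold sin_approx in H1, H2. simpl in H1, H2. unfold sin_term in H1, H2.
  simpl in H1, H2. field_simplify in H1. field_simplify in H2.
  assert (0 <= a^2 <= 1) by nra. assert (0<= a^3) by (apply pow_le; lra).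
  assert (a^5 <= 20 * a^3) by nra. split; lra.
Qed.

Lemma cos_bounds a : -1 <= a <= 1 -> 1 - a^2/2 <= cos a <= 1.
Proof.
  intros Ha. destruct (pre_cos_bound a 0 ltac:(lra) ltac:(lra)) as [H1 H2].
  unfold cos_approx in H1. simpl in H1. unfold cos_term in H1. simpl in H1.
  field_simplify in H1. split; [lra|]. apply COS_bound.
Qed.

Lemma sin_le_id a : 0 <= a -> sin a <= a.
Proof.
  intros Ha. destruct (Rle_lt_dec a 1).
  - apply sin_bounds; lra.
  - pose proof (SIN_bound a). lra.
Qed.

Lemma Rabs_sin_le a : Rabs (sin a) <= Rabs a.
Proof.
  destruct (Rle_lt_dec 0 a).
  - rewrite (Rabs_pos_eq a) by lra. destruct (Rle_lt_dec a 1).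
    + pose proof (sin_bounds a ltac:(lra)). apply Rabs_le.
      assert (a^3 <= a) by (simpl; nra). lra.
    + pose proof (SIN_bound a). apply Rabs_le. lra.
  - rewrite <- (Rabs_Ropp a), <- Rabs_Ropp, <- sin_neg.
    set (b := -a). rewrite (Rabs_pos_eq b) by (unfold b; lra). destruct (Rle_lt_dec b 1).
    + pose proof (sin_bounds b ltac:(unfold b in *; lra)). apply Rabs_le.
      assert (b^3 <= b) by (unfold b in *; simpl; nra). lra.
    + pose proof (SIN_bound b). apply Rabs_le. lra.
Qed.

Lemma Cmod_le_sum (z : C) : Cmod z <= Rabs (fst z) + Rabs (snd z).
Proof.
  destruct z as [a b]. unfold Cmod; simpl.
  rewrite <- (sqrt_pow2 (Rabs a + Rabs b)) by (pose proof (Rabs_pos a); pose proof (Rabs_pos b); lra).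
  apply sqrt_le_1_alt.
  pose proof (Rabs_pos a); pose proof (Rabs_pos b).
  rewrite <- (pow2_abs a), <- (pow2_abs b) at 1. nra.
Qed.

Lemma Cmod_fst (z : C) : Rabs (fst z) <= Cmod z.
Proof. apply re_le_Cmod. Qed.
Lemma Cmod_snd (z : C) : Rabs (snd z) <= Cmod z.
Proof. destruct z as [a b]. pose proof (Rmax_Cmod (a,b)). simpl in *.
  pose proof (Rmax_r (Rabs a) (Rabs b)). lra. Qed.

Lemma Cmod_ball (z w : C) (eps : R) : Cmod (Cminus w z) < eps -> ball z eps w.
Proof.
  intros H. destruct z as [a b]; destruct w as [c d].
  pose proof (Cmod_fst (Cminus (c,d) (a,b))). pose proof (Cmod_snd (Cminus (c,d) (a,b))).
  split; [change (Rabs (c - a) < eps) | change (Rabs (d - b) < eps)];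
  simpl in *; unfold Rminus; lra.
Qed.

Lemma ball_Cmod (z w : C) (eps : R) : ball z eps w -> Cmod (Cminus w z) < 2 * eps.
Proof.
  intros [H1 H2]. destruct z as [a b]; destruct w as [c d].
  change (Rabs (c - a) < eps) in H1. change (Rabs (d - b) < eps) in H2.
  pose proof (Cmod_le_sum (Cminus (c,d) (a,b))).
  simpl in *. unfold Rminus in *. lra.
Qed.

Lemma Cdiv_RtoC t a : a <> 0 -> Cdiv (cis t) (RtoC a) = (cos t / a, sin t / a).
Proof.
  intros Ha. unfold Cdiv, Cmult, Cinv, cis, RtoC; simpl. f_equal; field; auto.
Qed.

Lemma Cmod_cis t : Cmod (cis t) = 1.
Proof. unfold Cmod, cis; simpl. rewrite !Rmult_1_r. pose proof (sin2_cos2 t). unfold Rsqr in H.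
  rewrite Rplus_comm, H. apply sqrt_1. Qed.


Lemma Cmod_tri3 (a b c : C) : Cmod (Cminus a b) <= Cmod (Cminus a c) + Cmod (Cminus b c).
Proof.
  replace (Cminus a b) with (Cplus (Cminus a c) (Copp (Cminus b c))) by ring.
  eapply Rle_trans; [apply Cmod_triangle|]. rewrite Cmod_opp. lra.
Qed.

Lemma Cmod_sym (a b : C) : Cmod (Cminus a b) = Cmod (Cminus b a).
Proof. replace (Cminus a b) with (Copp (Cminus b a)) by ring. apply Cmod_opp. Qed.

Lemma seq_lim (u : nat -> C) (e : nat -> R) :
  (forall n m, (n <= m)%nat -> Cmod (Cminus (u m) (u n)) <= e n) ->
  (forall eps, 0 < eps -> exists N, forall n, (N <= n)%nat -> e n < eps) ->
  exists l : C, filterlim u eventually (locally (l : C_R_CompleteNormedModule)) /\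
    forall n, Cmod (Cminus l (u n)) <= e n.
Proof.
  intros Hc He.
  destruct (proj1 (@filterlim_locally_cauchy _ C_R_CompleteNormedModule eventually _ u)) as [l Hl].
  - intros eps. destruct (He (eps/2)) as [N HN]. { destruct eps; simpl; lra. }
    exists (fun n => (N <= n)%nat). split. { exists N; auto. }
    intros p q Hp Hq. apply Cmod_ball.
    pose proof (Cmod_tri3 (u q) (u p) (u N)).
    pose proof (Hc N p Hp). pose proof (Hc N q Hq). pose proof (HN N (le_n _)).
    lra.
  - exists l. split; auto. intros n. apply Rle_plus_epsilon. intros d Hd.
    assert (Hd2 : 0 < d / 2) by lra.
    destruct (Hl (ball l (mkposreal _ Hd2)) (locally_ball _ _)) as [N HN].
    pose (m := max N n).
    pose proof (HN m (Nat.le_max_l _ _)) as Hm. apply ball_Cmod in Hm. simpl in Hm.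
    pose proof (Cmod_tri3 l (u n) (u m)). rewrite (Cmod_sym l (u m)), (Cmod_sym (u n) (u m)) in H.
    pose proof (Hc n m (Nat.le_max_r _ _)). lra.
Qed.

Lemma lim_eq (u : nat -> C) (l : C) :
  filterlim u eventually (locally (l : C_R_CompleteNormedModule)) ->
  @lim C_R_CompleteNormedModule (filtermap u eventually) = l.
Proof.
  intros Hl.
  apply (@filterlim_locally_unique _ _ C_R_NormedModule eventually _ u); [|exact Hl].
  intros P [eps HP].
  assert (Hc := @complete_cauchy C_R_CompleteNormedModule (filtermap u eventually) _).
  assert (Hcau : cauchy (filtermap u eventually)).
  { intros e. exists l. apply Hl. apply locally_ball. }
  specialize (Hc Hcau eps). unfold filtermap in *. eapply filter_imp; [|exact Hc].
  intros x Hx. apply HP. exact Hx.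
Qed.


Definition fre (nu u : R) := cos u / (u + nu).
Definition fim (nu u : R) := sin u / (u + nu).
Definition Icomp (nu T : R) : C := (RInt (fre nu) 0 T, RInt (fim nu) 0 T).

Lemma cont_p1 (p : R -> R) nu x : (forall y, ex_derive p y) -> 0 < nu -> 0 <= x ->
  continuous (fun u => p u / (u + nu)) x.
Proof.
  intros Hp Hnu Hx. apply (ex_derive_continuous (V:=R_NormedModule) (fun u => p u / (u+nu))).
  auto_derive. repeat split; auto; nra.
Qed.

Lemma cont_p2 (p : R -> R) nu x : (forall y, ex_derive p y) -> 0 < nu -> 0 <= x ->
  continuous (fun u => p u / (u + nu)^2) x.
Proof.
  intros Hp Hnu Hx. apply (ex_derive_continuous (V:=R_NormedModule) (fun u => p u / (u+nu)^2)).
  auto_derive. repeat split; auto; nra.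
Qed.

Lemma ex_p1 (p : R -> R) nu a b : (forall y, ex_derive p y) -> 0 < nu -> 0 <= a -> 0 <= b ->
  ex_RInt (fun u => p u / (u + nu)) a b.
Proof.
  intros. apply (ex_RInt_continuous (V:=R_CompleteNormedModule)). intros z Hz.
  apply cont_p1; auto. pose proof (Rmin_glb_lt a b). unfold Rmin in Hz. destruct (Rle_dec a b); lra.
Qed.

Lemma ex_p2 (p : R -> R) nu a b : (forall y, ex_derive p y) -> 0 < nu -> 0 <= a -> 0 <= b ->
  ex_RInt (fun u => p u / (u + nu)^2) a b.
Proof.
  intros. apply (ex_RInt_continuous (V:=R_CompleteNormedModule)). intros z Hz.
  apply cont_p2; auto. unfold Rmin in Hz. destruct (Rle_dec a b); lra.
Qed.

Lemma exd_sin y : ex_derive sin y.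
Proof. auto_derive. auto. Qed.
Lemma exd_cos y : ex_derive cos y.
Proof. auto_derive. auto. Qed.

Lemma sq_bound (p : R -> R) nu a b : (forall y, ex_derive p y) -> (forall y, Rabs (p y) <= 1) ->
  0 < nu -> 0 <= a <= b ->
  Rabs (RInt (fun u => p u / (u + nu)^2) a b) <= 1 / (a + nu) - 1 / (b + nu).
Proof.
  intros Hp Hb Hnu Hab.
  assert (Hg : is_RInt (fun u => 1 / (u + nu)^2) a b (minus (-1/(b+nu)) (-1/(a+nu)))).
  { apply (is_RInt_derive (V:=R_CompleteNormedModule) (fun u => -1/(u+nu))).
    - intros x Hx. unfold Rmin, Rmax in Hx. destruct (Rle_dec a b); try lra.
      auto_derive. lra. field. lra.
    - intros x Hx. unfold Rmin, Rmax in Hx. destruct (Rle_dec a b); try lra.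
      apply (cont_p2 (fun _ => 1)); auto; try lra. intros; auto_derive; auto. }
  assert (H := norm_RInt_le (V:=R_NormedModule) (fun u => p u / (u + nu)^2) (fun u => 1 / (u + nu)^2) a b
    (RInt (fun u => p u / (u + nu)^2) a b) (minus (-1/(b+nu)) (-1/(a+nu)))
    (proj2 Hab)).
  change (norm (RInt (fun u : R => p u / (u + nu) ^ 2) a b) <= 1 / (a + nu) - 1 / (b + nu)).
  replace (1 / (a + nu) - 1 / (b + nu)) with (minus (-1/(b+nu)) (-1/(a+nu))).
  2:{ unfold minus, plus, opp; simpl. field. lra. }
  apply H; auto.
  - intros x Hx. change (Rabs (p x / (x + nu)^2) <= 1 / (x + nu)^2).
    unfold Rdiv. rewrite Rabs_mult, Rabs_inv, (Rabs_pos_eq ((x+nu)^2)) by (apply pow_le; lra).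
    rewrite Rmult_1_l. pose proof (Hb x). assert (0 < / (x+nu)^2).
    { apply Rinv_0_lt_compat. apply pow_lt. lra. } nra.
  - apply (RInt_correct (V:=R_CompleteNormedModule)). apply ex_p2; auto; lra.
Qed.

Lemma div_le1 p c d : Rabs p <= 1 -> 0 < d <= c -> Rabs (p / c) <= 1 / d.
Proof.
  intros Hp Hd. unfold Rdiv. rewrite Rabs_mult, Rabs_inv, (Rabs_pos_eq c) by lra.
  rewrite Rmult_1_l. apply Rle_trans with (1 * / c).
  - apply Rmult_le_compat_r; auto. left; apply Rinv_0_lt_compat; lra.
  - rewrite Rmult_1_l. apply Rinv_le_contravar; lra.
Qed.

Lemma fre_bound nu a b : 0 < nu -> 0 <= a <= b -> Rabs (RInt (fre nu) a b) <= 3 / (a + nu).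
Proof.
  intros Hnu Hab.
  assert (HG : is_RInt (fun u => cos u / (u+nu) - sin u / (u+nu)^2) a b
                 (minus (sin b / (b+nu)) (sin a / (a+nu)))).
  { apply (is_RInt_derive (V:=R_CompleteNormedModule) (fun u => sin u/(u+nu))).
    - intros x Hx. unfold Rmin, Rmax in Hx. destruct (Rle_dec a b); try lra.
      auto_derive. lra. field. lra.
    - intros x Hx. unfold Rmin, Rmax in Hx. destruct (Rle_dec a b); try lra.
      apply (ex_derive_continuous (V:=R_NormedModule) (fun u => cos u / (u+nu) - sin u / (u+nu)^2)).
      auto_derive. repeat split; auto; nra. }
  assert (HJ : is_RInt (fun u => sin u / (u+nu)^2) a b (RInt (fun u => sin u / (u+nu)^2) a b)).
  { apply (RInt_correct (V:=R_CompleteNormedModule)). apply ex_p2; auto using exd_sin; lra. }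
  pose proof (sq_bound sin nu a b exd_sin (fun y => Rabs_le _ _ (SIN_bound y)) Hnu Hab) as HB.
  assert (HS := is_RInt_plus _ _ _ _ _ _ HG HJ).
  assert (HE : RInt (fre nu) a b = plus (minus (sin b / (b+nu)) (sin a / (a+nu))) (RInt (fun u => sin u / (u+nu)^2) a b)).
  { apply is_RInt_unique. eapply is_RInt_ext; [|exact HS].
    intros x Hx. unfold fre, plus; simpl. ring. }
  rewrite HE. change (Rabs (sin b / (b+nu) - sin a / (a+nu) + RInt (fun u => sin u / (u+nu)^2) a b) <= 3/(a+nu)).
  pose proof (div_le1 (sin b) (b+nu) (a+nu) ltac:(apply Rabs_le; apply SIN_bound) ltac:(lra)).
  pose proof (div_le1 (sin a) (a+nu) (a+nu) ltac:(apply Rabs_le; apply SIN_bound) ltac:(lra)).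
  assert (0 < 1/(b+nu)) by (apply Rdiv_lt_0_compat; lra).
  unfold Rdiv in *. 
  eapply Rle_trans; [apply Rabs_triang|]. eapply Rle_trans; [apply Rplus_le_compat_r; apply Rabs_triang|].
  rewrite Rabs_Ropp. lra.
Qed.

Lemma fim_bound nu a b : 0 < nu -> 0 <= a <= b -> Rabs (RInt (fim nu) a b) <= 3 / (a + nu).
Proof.
  intros Hnu Hab.
  assert (HG : is_RInt (fun u => sin u / (u+nu) + cos u / (u+nu)^2) a b
                 (minus (- cos b / (b+nu)) (- cos a / (a+nu)))).
  { apply (is_RInt_derive (V:=R_CompleteNormedModule) (fun u => - cos u/(u+nu))).
    - intros x Hx. unfold Rmin, Rmax in Hx. destruct (Rle_dec a b); try lra.
      auto_derive. lra. field. lra.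
    - intros x Hx. unfold Rmin, Rmax in Hx. destruct (Rle_dec a b); try lra.
      apply (ex_derive_continuous (V:=R_NormedModule) (fun u => sin u / (u+nu) + cos u / (u+nu)^2)).
      auto_derive. repeat split; auto; nra. }
  assert (HJ : is_RInt (fun u => cos u / (u+nu)^2) a b (RInt (fun u => cos u / (u+nu)^2) a b)).
  { apply (RInt_correct (V:=R_CompleteNormedModule)). apply ex_p2; auto using exd_cos; lra. }
  pose proof (sq_bound cos nu a b exd_cos (fun y => Rabs_le _ _ (COS_bound y)) Hnu Hab) as HB.
  assert (HS := is_RInt_minus _ _ _ _ _ _ HG HJ).
  assert (HE : RInt (fim nu) a b = minus (minus (- cos b / (b+nu)) (- cos a / (a+nu))) (RInt (fun u => cos u / (u+nu)^2) a b)).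
  { apply is_RInt_unique. eapply is_RInt_ext; [|exact HS].
    intros x Hx. unfold fim, minus, plus, opp; simpl. ring. }
  rewrite HE. change (Rabs (- cos b / (b+nu) - - cos a / (a+nu) - RInt (fun u => cos u / (u+nu)^2) a b) <= 3/(a+nu)).
  pose proof (div_le1 (- cos b) (b+nu) (a+nu) ltac:(rewrite Rabs_Ropp; apply Rabs_le; apply COS_bound) ltac:(lra)).
  pose proof (div_le1 (- cos a) (a+nu) (a+nu) ltac:(rewrite Rabs_Ropp; apply Rabs_le; apply COS_bound) ltac:(lra)).
  assert (0 < 1/(b+nu)) by (apply Rdiv_lt_0_compat; lra).
  unfold Rdiv in *.
  eapply Rle_trans; [apply Rabs_triang|]. eapply Rle_trans; [apply Rplus_le_compat_r; apply Rabs_triang|].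
  rewrite !Rabs_Ropp. lra.
Qed.

Lemma ex_fre nu a b : 0 < nu -> 0 <= a -> 0 <= b -> ex_RInt (fre nu) a b.
Proof. intros. apply (ex_p1 cos); auto using exd_cos. Qed.
Lemma ex_fim nu a b : 0 < nu -> 0 <= a -> 0 <= b -> ex_RInt (fim nu) a b.
Proof. intros. apply (ex_p1 sin); auto using exd_sin. Qed.

Lemma Icomp_diff nu a b : 0 < nu -> 0 <= a -> 0 <= b ->
  Cminus (Icomp nu b) (Icomp nu a) = (RInt (fre nu) a b, RInt (fim nu) a b).
Proof.
  intros Hnu Ha Hb. unfold Icomp.
  rewrite <- (RInt_Chasles (V:=R_CompleteNormedModule) (fre nu) 0 a b) by (apply ex_fre; lra).
  rewrite <- (RInt_Chasles (V:=R_CompleteNormedModule) (fim nu) 0 a b) by (apply ex_fim; lra).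
  unfold Cminus, Cplus, Copp, plus; simpl. f_equal; ring.
Qed.

Lemma Icomp_cauchy nu a b : 0 < nu -> 0 <= a <= b ->
  Cmod (Cminus (Icomp nu b) (Icomp nu a)) <= 6 / (a + nu).
Proof.
  intros Hnu Hab. rewrite Icomp_diff by lra.
  eapply Rle_trans; [apply Cmod_le_sum|]. simpl.
  pose proof (fre_bound nu a b Hnu Hab). pose proof (fim_bound nu a b Hnu Hab).
  unfold Rdiv in *. lra.
Qed.


Lemma nat_above T : exists n : nat, T <= INR n.
Proof.
  destruct (archimed T) as [H1 H2].
  destruct (Z_le_gt_dec 0 (up T)).
  - exists (Z.to_nat (up T)). rewrite INR_IZR_INZ, Z2Nat.id by auto. lra.
  - exists 0%nat. simpl. apply Z.gt_lt in g. apply IZR_lt in g. lra.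
Qed.

Lemma decay K c : 0 <= K -> 0 < c -> forall eps, 0 < eps ->
  exists N, forall n, (N <= n)%nat -> K / (INR n + c) < eps.
Proof.
  intros HK Hc eps He. destruct (nat_above (K / eps)) as [N HN].
  exists N. intros n Hn. apply le_INR in Hn.
  assert (0 <= K/eps) by (apply Rdiv_le_0_compat; lra).
  apply (Rmult_lt_reg_r (INR n + c)). lra. unfold Rdiv. rewrite Rmult_assoc, Rinv_l by lra.
  assert (K <= eps * INR n).
  { replace K with (eps * (K/eps)) by (field; lra). apply Rmult_le_compat_l; lra. }
  nra.
Qed.

Lemma Icomp_isRInt nu T : 0 < nu -> 0 <= T ->
  is_RInt (V:=C_R_NormedModule) (fun u => Cdiv (cis u) (RtoC (u + nu))) 0 T (Icomp nu T).
Proof.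
  intros Hnu HT.
  assert (H : is_RInt (V:=prod_NormedModule R_AbsRing R_NormedModule R_NormedModule)
            (fun u => (fre nu u, fim nu u)) 0 T (Icomp nu T)).
  { apply is_RInt_fct_extend_pair; simpl;
    apply (RInt_correct (V:=R_CompleteNormedModule)); [apply ex_fre|apply ex_fim]; lra. }
  eapply (is_RInt_ext (V:=C_R_NormedModule)); [|exact H].
  intros x Hx. unfold Rmin, Rmax in Hx. destruct (Rle_dec 0 T); try lra.
  rewrite Cdiv_RtoC by lra. reflexivity.
Qed.

Lemma E_spec nu : 0 < nu -> forall T, 0 <= T -> Cmod (Cminus (E nu) (Icomp nu T)) <= 12 / (T + nu).
Proof.
  intros Hnu.
  destruct (seq_lim (fun n => Icomp nu (INR n)) (fun n => 6 / (INR n + nu))) as [l [Hl Hb]].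
  { intros n m Hnm. apply Icomp_cauchy; auto. split. apply pos_INR. apply le_INR; auto. }
  { apply decay; lra. }
  assert (HT : forall T, 0 <= T -> Cmod (Cminus l (Icomp nu T)) <= 12 / (T + nu)).
  { intros T HT. destruct (nat_above T) as [n Hn].
    pose proof (Cmod_tri3 l (Icomp nu T) (Icomp nu (INR n))) as Ht. rewrite (Cmod_sym (Icomp nu T)) in Ht.
    pose proof (Hb n). pose proof (Icomp_cauchy nu T (INR n) Hnu (conj HT Hn)).
    assert (6 / (INR n + nu) <= 6 / (T + nu)).
    { unfold Rdiv. apply Rmult_le_compat_l; [lra|]. apply Rinv_le_contravar; lra. }
    unfold Rdiv in *. lra. }
  assert (HE : E nu = l).
  { unfold E. apply (is_RInt_gen_unique (V:=C_R_CompleteNormedModule)).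
    intros P [eps HP]. unfold filtermapi.
    apply Filter_prod with (Q := fun a => a = 0) (R := fun b => Rmax 0 (24/eps) < b).
    - reflexivity.
    - exists (Rmax 0 (24/eps)). auto.
    - intros x y -> Hy. simpl. exists (Icomp nu y). split.
      + apply Icomp_isRInt; auto. pose proof (Rmax_l 0 (24/eps)). lra.
      + apply HP. apply Cmod_ball. rewrite Cmod_sym.
        pose proof (Rmax_l 0 (24/eps)). pose proof (Rmax_r 0 (24/eps)).
        eapply Rle_lt_trans; [apply HT; lra|].
        destruct eps as [e He]; simpl in *.
        apply (Rmult_lt_reg_r (y + nu)); [lra|]. unfold Rdiv. rewrite Rmult_assoc, Rinv_l by lra.
        assert (24 / e * e = 24) by (field; lra). nra. }
  rewrite HE. exact HT.
Qed.


Lemma pt_core a u h nu nu' : 0 <= a -> a <= u <= a + h -> nu - h <= nu' <= nu -> 0 < nu -> 0 < h ->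
  Rabs (1 / (a + h + nu') - 1 / (u + nu)) <= h / (a + nu)^2.
Proof.
  intros Ha Hu Hn Hnu Hh.
  set (X := a + h + nu'). set (Y := u + nu).
  assert (HX : a + nu <= X) by (unfold X; lra). assert (HY : a + nu <= Y) by (unfold Y; lra).
  replace (1 / X - 1 / Y) with ((Y - X) / (X * Y)) by (field; lra).
  unfold Rdiv. rewrite Rabs_mult, Rabs_inv, (Rabs_pos_eq (X*Y)) by nra.
  assert (Rabs (Y - X) <= h) by (apply Rabs_le; unfold X, Y; lra).
  assert (/ (X * Y) <= / (a + nu)^2).
  { apply Rinv_le_contravar. apply pow_lt; lra. simpl. nra. }
  assert (0 < / (X * Y)) by (apply Rinv_0_lt_compat; nra).
  pose proof (Rabs_pos (Y - X)). nra.
Qed.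

Lemma rem_bound (p P : R -> R) nu nu' a h :
  (forall y, ex_derive p y) -> (forall y, is_derive P y (p y)) -> (forall y, Rabs (p y) <= 1) ->
  0 <= a -> nu - h <= nu' <= nu -> 0 < nu -> 0 < h ->
  Rabs ((P (a + h) - P a) / (a + h + nu') - RInt (fun u => p u / (u + nu)) a (a + h))
    <= h * (h / (a + nu)^2).
Proof.
  intros Hp HP Hb Ha Hn Hnu Hh.
  assert (HX : 0 < a + h + nu') by lra.
  assert (H1 : is_RInt (fun u => p u / (a + h + nu')) a (a + h)
                 (minus (P (a+h) / (a + h + nu')) (P a / (a + h + nu')))).
  { apply (is_RInt_derive (V:=R_CompleteNormedModule) (fun u => P u / (a + h + nu'))).
    - intros x Hx. auto_derive. exists (p x); apply HP.
      change (1 * Derive P x * / (a + h + nu') = p x / (a + h + nu')).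
      rewrite (is_derive_unique _ _ _ (HP x)). field. lra.
    - intros x Hx. apply (ex_derive_continuous (V:=R_NormedModule) (fun u => p u / (a+h+nu'))).
      auto_derive. repeat split; auto; lra. }
  assert (H2 : is_RInt (fun u => p u / (u + nu)) a (a + h) (RInt (fun u => p u / (u + nu)) a (a + h))).
  { apply (RInt_correct (V:=R_CompleteNormedModule)). apply ex_p1; auto; lra. }
  assert (H3 := is_RInt_minus _ _ _ _ _ _ H1 H2).
  assert (HB : forall x, a <= x <= a + h ->
     norm (minus (p x / (a + h + nu')) (p x / (x + nu))) <= h / (a + nu)^2).
  { intros x Hx.
    change (Rabs (p x / (a + h + nu') - p x / (x + nu)) <= h / (a + nu)^2).
    replace (p x / (a + h + nu') - p x / (x + nu)) with (p x * (1 / (a + h + nu') - 1 / (x + nu)))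
      by (field; lra).
    rewrite Rabs_mult. pose proof (Hb x). pose proof (pt_core a x h nu nu' Ha Hx Hn Hnu Hh).
    pose proof (Rabs_pos (p x)). pose proof (Rabs_pos (1 / (a + h + nu') - 1 / (x + nu))).
    assert (0 <= h / (a + nu)^2) by (apply Rdiv_le_0_compat; [lra| apply pow_lt; lra]).
    nra. }
  assert (H4 := norm_RInt_le_const (V:=R_NormedModule) _ a (a + h) _ (h / (a + nu)^2) ltac:(lra)
    HB H3).
  change (norm (minus (minus (P (a+h) / (a + h + nu')) (P a / (a + h + nu'))) (RInt (fun u => p u / (u + nu)) a (a + h))) <= (a + h - a) * (h / (a + nu)^2)) in H4.
  replace (a + h - a) with h in H4 by ring.
  replace ((P (a + h) - P a) / (a + h + nu')) with (minus (P (a+h) / (a + h + nu')) (P a / (a + h + nu'))).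
  exact H4.
  unfold minus, plus, opp; simpl. field. lra.
Qed.

Definition W (h : R) : C := (sin h, cos h - 1).
Definition Dk (nu' h : R) (k : nat) : C :=
  ((sin (INR (S k) * h) - sin (INR k * h)) / (INR (S k) * h + nu'),
   (cos (INR k * h) - cos (INR (S k) * h)) / (INR (S k) * h + nu')).
Definition rk (nu nu' h : R) (k : nat) : C :=
  Cminus (Dk nu' h k) (Cminus (Icomp nu (INR (S k) * h)) (Icomp nu (INR k * h))).
Definition Tn (h mu : R) (N : nat) : C := sum_n (fun k => L_term h mu (S k)) N.

Lemma claim1 h mu k : 0 < h -> 0 <= mu ->
  Cmult (W h) (L_term h mu (S k)) = Cmult (RtoC h) (Dk (mu * h) h k).
Proof.
  intros Hh Hmu. unfold L_term, Dk, W.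
  pose proof (pos_INR (S k)).
  assert (0 < INR (S k)) by (apply lt_0_INR; lia).
  rewrite Cdiv_RtoC by lra.
  replace (INR k * h) with (INR (S k) * h - h) by (rewrite S_INR; ring).
  set (s := INR (S k)) in *.
  set (b := s * h).
  rewrite sin_minus, cos_minus.
  unfold Cmult, RtoC; simpl.
  assert (0 < b + mu * h) by (unfold b; nra).
  assert (b + mu * h = h * (s + mu)) by (unfold b; ring).
  rewrite H2. f_equal; field; split; lra.
Qed.

Lemma Icomp0 nu : Icomp nu 0 = (0, 0).
Proof. unfold Icomp. rewrite !RInt_point. reflexivity. Qed.

Lemma claim2 nu h mu N : 0 < h -> 0 <= mu ->
  Cmult (W h) (Tn h mu N) =
  Cmult (RtoC h) (Cplus (Icomp nu (INR (S N) * h)) (sum_n (rk nu (mu * h) h) N)).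
Proof.
  intros Hh Hmu. induction N.
  - unfold Tn. rewrite !sum_O. rewrite claim1 by auto. unfold rk.
    replace (INR 0 * h) with 0 by (simpl; ring). rewrite Icomp0.
    change (@pair R R 0 0) with (RtoC 0). ring.
  - unfold Tn in *. rewrite !sum_Sn.
    change (plus (sum_n (fun k : nat => L_term h mu (S k)) N) (L_term h mu (S (S N))))
      with (Cplus (sum_n (fun k : nat => L_term h mu (S k)) N) (L_term h mu (S (S N)))).
    change (plus (sum_n (rk nu (mu * h) h) N) (rk nu (mu * h) h (S N)))
      with (Cplus (sum_n (rk nu (mu * h) h) N) (rk nu (mu * h) h (S N))).
    rewrite Cmult_plus_distr_l, IHN, claim1 by auto. unfold rk. ring.
Qed.

Lemma claim3 nu nu' h k : 0 < nu -> 0 < h -> nu - h <= nu' <= nu ->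
  Cmod (rk nu nu' h k) <= 2 * (h * (h / (INR k * h + nu)^2)).
Proof.
  intros Hnu Hh Hn. unfold rk, Dk.
  assert (Ha : 0 <= INR k * h) by (pose proof (pos_INR k); nra).
  replace (INR (S k) * h) with (INR k * h + h) by (rewrite S_INR; ring).
  rewrite Icomp_diff by lra.
  set (a := INR k * h) in *.
  eapply Rle_trans; [apply Cmod_le_sum|]. simpl.
  pose proof (rem_bound cos sin nu nu' a h exd_cos
    (fun y => ltac:(auto_derive; auto; ring)) (fun y => Rabs_le _ _ (COS_bound y)) Ha Hn Hnu Hh) as H1.
  pose proof (rem_bound sin (fun y => - cos y) nu nu' a h exd_sin
    (fun y => ltac:(auto_derive; auto; ring)) (fun y => Rabs_le _ _ (SIN_bound y)) Ha Hn Hnu Hh) as H2.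
  change (RInt (fun u => cos u / (u + nu)) a (a + h)) with (RInt (fre nu) a (a + h)) in H1.
  change (RInt (fun u => sin u / (u + nu)) a (a + h)) with (RInt (fim nu) a (a + h)) in H2.
  cbv beta in H2.
  replace (- cos (a + h) - - cos a) with (cos a - cos (a + h)) in H2 by ring.
  change (Rabs ((sin (a + h) - sin a) / (a + h + nu') - RInt (fre nu) a (a + h)) +
    Rabs ((cos a - cos (a + h)) / (a + h + nu') - RInt (fim nu) a (a + h)) <=
    2 * (h * (h / (a + nu)^2))). lra.
Qed.

Definition psi (nu h : R) (n : nat) := 1 / (INR n * h + nu).

Lemma term_tel nu h m : 0 < nu -> 0 < h ->
  2 * (h * (h / (INR (S m) * h + nu)^2)) <= 2 * h * (psi nu h m - psi nu h (S m)).
Proof.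
  intros Hnu Hh. unfold psi. rewrite S_INR. pose proof (pos_INR m).
  set (x := INR m * h + nu). assert (0 < x) by (unfold x; nra).
  replace ((INR m + 1) * h + nu) with (x + h) by (unfold x; ring).
  replace (1 / x - 1 / (x + h)) with (h / (x * (x + h))) by (field; lra).
  assert (h / (x + h)^2 <= h / (x * (x + h))).
  { unfold Rdiv. apply Rmult_le_compat_l; [lra|]. apply Rinv_le_contravar; nra. }
  nra.
Qed.

Lemma tail_bound (r : nat -> C) nu h : 0 < nu -> 0 < h ->
  (forall k, Cmod (r k) <= 2 * (h * (h / (INR k * h + nu)^2))) ->
  forall n d, Cmod (Cminus (sum_n r (n + d)) (sum_n r n)) <= 2 * h * (psi nu h n - psi nu h (n + d)).
Proof.
  intros Hnu Hh Hr n d. induction d.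
  - rewrite Nat.add_0_r. replace (Cminus (sum_n r n) (sum_n r n)) with (RtoC 0) by ring.
    rewrite Cmod_0. lra.
  - rewrite Nat.add_succ_r, sum_Sn.
    change (plus (sum_n r (n + d)) (r (S (n + d)))) with (Cplus (sum_n r (n + d)) (r (S (n + d)))).
    replace (Cminus (Cplus (sum_n r (n + d)) (r (S (n + d)))) (sum_n r n))
      with (Cplus (Cminus (sum_n r (n + d)) (sum_n r n)) (r (S (n + d)))) by ring.
    eapply Rle_trans; [apply Cmod_triangle|].
    pose proof (Hr (S (n + d))). pose proof (term_tel nu h (n + d) Hnu Hh). lra.
Qed.

Lemma psi_pos nu h n : 0 < nu -> 0 < h -> 0 < psi nu h n.
Proof. intros. unfold psi. pose proof (pos_INR n). apply Rdiv_lt_0_compat; nra. Qed.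

Lemma sum_bound (r : nat -> C) nu h : 0 < nu -> 0 < h ->
  (forall k, Cmod (r k) <= 2 * (h * (h / (INR k * h + nu)^2))) ->
  forall N, Cmod (sum_n r N) <= 2 * (h * (h / nu^2)) + 2 * h / nu.
Proof.
  intros Hnu Hh Hr N.
  pose proof (tail_bound r nu h Hnu Hh Hr 0 N) as H. simpl in H.
  replace (Cminus (sum_n r N) (sum_n r 0)) with (Cminus (sum_n r N) (r 0%nat)) in H by (rewrite sum_O; reflexivity).
  replace (sum_n r N) with (Cplus (Cminus (sum_n r N) (r 0%nat)) (r 0%nat)) by ring.
  eapply Rle_trans; [apply Cmod_triangle|].
  pose proof (Hr 0%nat). simpl in H0. replace (0 * h + nu) with nu in H0 by ring.
  pose proof (psi_pos nu h N Hnu Hh). unfold psi in H at 1. simpl in H.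
  replace (0 * h + nu) with nu in H by ring.
  assert (2 * h * (1 / nu - psi nu h N) <= 2 * h / nu).
  { unfold Rdiv. nra. }
  replace (nu * (nu * 1)) with (nu ^ 2) in H0 by ring. lra.
Qed.


Lemma Cmod_hmul h z : 0 <= h -> Cmod (Cmult (RtoC h) z) = h * Cmod z.
Proof. intros. rewrite Cmod_mult, Cmod_R, Rabs_pos_eq; auto. Qed.

Lemma W_bounds h : 0 < h <= 1 -> h / 2 <= Cmod (W h) /\ Cmod (Cminus (RtoC h) (W h)) <= h^2.
Proof.
  intros Hh. pose proof (sin_bounds h ltac:(lra)). pose proof (cos_bounds h ltac:(lra)).
  assert (h^3 <= h^2) by (simpl; nra). assert (h^3 <= h) by (simpl; nra).
  split.
  - eapply Rle_trans; [|apply Cmod_fst]. simpl. rewrite Rabs_pos_eq; lra.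
  - eapply Rle_trans; [apply Cmod_le_sum|]. simpl.
    rewrite Rabs_pos_eq by lra. rewrite Rabs_pos_eq by lra. lra.
Qed.

Lemma le_div_mul c x y : 0 < c -> c * x <= y -> x <= y / c.
Proof. intros Hc H. apply (Rmult_le_reg_l c); auto. unfold Rdiv. rewrite <- Rmult_assoc, (Rmult_comm c y), Rmult_assoc, Rinv_r, Rmult_1_r by lra. lra. Qed.

Lemma div_le_inv h x y : 0 < x -> 0 < y -> h * x <= y -> h / y <= / x.
Proof.
  intros Hx Hy H. replace (h / y) with ((h * x) * (/ x * / y)) by (field; lra).
  replace (/ x) with (y * (/ x * / y)) at 2 by (field; lra).
  apply Rmult_le_compat_r; auto. left. apply Rmult_lt_0_compat; apply Rinv_0_lt_compat; lra.
Qed.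

Lemma mainA nu h mu : 0 < nu -> 0 < h -> h <= 1 -> h <= nu -> nu - h <= mu * h <= nu ->
  Cmod (Cminus (L h mu) (E nu)) <= h * (4 / nu^2 + 4 / nu + 2 * Cmod (E nu)).
Proof.
  intros Hnu Hh Hh1 Hhn Hmu.
  assert (Hmu0 : 0 <= mu).
  { destruct (Rle_lt_dec 0 mu); auto. nra. }
  set (r := rk nu (mu * h) h).
  assert (Hr : forall k, Cmod (r k) <= 2 * (h * (h / (INR k * h + nu)^2))).
  { intros k. apply claim3; auto; lra. }
  destruct (W_bounds h ltac:(lra)) as [HW1 HW2].
  set (cW := Cmod (W h)) in *.
  set (K1 := (6 + 2 * h) / cW).
  assert (HK1 : 0 <= K1) by (unfold K1; apply Rdiv_le_0_compat; lra).
  assert (Hcau : forall n m, (n <= m)%nat -> Cmod (Cminus (Tn h mu m) (Tn h mu n)) <= K1 / (INR n + 1)).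
  { intros n m Hnm.
    assert (HWd : Cmult (W h) (Cminus (Tn h mu m) (Tn h mu n)) =
       Cmult (RtoC h) (Cplus (Cminus (Icomp nu (INR (S m) * h)) (Icomp nu (INR (S n) * h)))
                             (Cminus (sum_n r m) (sum_n r n)))).
    { replace (Cmult (W h) (Cminus (Tn h mu m) (Tn h mu n))) with
        (Cminus (Cmult (W h) (Tn h mu m)) (Cmult (W h) (Tn h mu n))) by ring.
      rewrite !(claim2 nu). unfold r. ring. all: auto. }
    assert (H1 : Cmod (Cminus (Icomp nu (INR (S m) * h)) (Icomp nu (INR (S n) * h))) <= 6 / (INR (S n) * h + nu)).
    { apply Icomp_cauchy; auto. split. pose proof (pos_INR (S n)); nra.
      apply Rmult_le_compat_r; [lra|]. apply le_INR; lia. }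
    assert (H2 : Cmod (Cminus (sum_n r m) (sum_n r n)) <= 2 * h * psi nu h n).
    { replace m with (n + (m - n))%nat by lia.
      pose proof (tail_bound r nu h Hnu Hh Hr n (m - n)).
      pose proof (psi_pos nu h (n + (m - n)) Hnu Hh). nra. }
    assert (H3 : h * (6 / (INR (S n) * h + nu)) <= 6 / (INR n + 1)).
    { rewrite S_INR. pose proof (pos_INR n). unfold Rdiv.
      replace (h * (6 * / ((INR n + 1) * h + nu))) with (6 * (h / ((INR n + 1) * h + nu))) by (unfold Rdiv; ring).
      apply Rmult_le_compat_l; [lra|]. apply div_le_inv; nra. }
    assert (H4 : h * (2 * h * psi nu h n) <= 2 * h / (INR n + 1)).
    { unfold psi. pose proof (pos_INR n).
      apply le_div_mul. lra.
      replace ((INR n + 1) * (h * (2 * h * (1 / (INR n * h + nu))))) with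
        (2 * h * (h * (INR n + 1) / (INR n * h + nu))) by (field; nra).
      assert (h * (INR n + 1) / (INR n * h + nu) <= 1).
      { apply Rle_trans with ((INR n * h + nu) / (INR n * h + nu)).
        unfold Rdiv. apply Rmult_le_compat_r. left; apply Rinv_0_lt_compat; nra. nra.
        right. field. nra. }
      nra. }
    assert (HX : cW * Cmod (Cminus (Tn h mu m) (Tn h mu n)) <= (6 + 2 * h) / (INR n + 1)).
    { unfold cW. rewrite <- Cmod_mult, HWd, Cmod_hmul by lra.
      eapply Rle_trans. apply Rmult_le_compat_l. lra. apply Cmod_triangle.
      replace ((6 + 2 * h) / (INR n + 1)) with (6 / (INR n + 1) + 2 * h / (INR n + 1)) by (field; pose proof (pos_INR n); lra).
      nra. }
    unfold K1. apply le_div_mul in HX; [|lra].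
    replace ((6 + 2 * h) / cW / (INR n + 1)) with ((6 + 2 * h) / (INR n + 1) / cW) by (field; pose proof (pos_INR n); lra).
    exact HX. }
  destruct (seq_lim (Tn h mu) (fun n => K1 / (INR n + 1)) Hcau (decay K1 1 HK1 ltac:(lra))) as [Lv [HLv HbLv]].
  assert (HL : L h mu = Lv) by (apply lim_eq; exact HLv).
  rewrite HL.
  set (B := 2 * (h * (h / nu^2)) + 2 * h / nu).
  assert (HRn : forall n, Cmod (sum_n r n) <= B) by (intros; apply sum_bound; auto).
  assert (HB0 : 0 <= B).
  { unfold B. assert (0 < h / nu^2) by (apply Rdiv_lt_0_compat; [lra|apply pow_lt; lra]).
    assert (0 < 2 * h / nu) by (apply Rdiv_lt_0_compat; lra). nra. }
  assert (H6 : Cmod (Cminus (Cmult (W h) Lv) (Cmult (RtoC h) (E nu))) <= h * B).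
  { apply Rle_plus_epsilon. intros d Hd.
    assert (HK : 0 <= cW * K1 + 12) by nra.
    destruct (decay (cW * K1 + 12) 1 HK ltac:(lra) d Hd) as [n Hn]. specialize (Hn n (le_n _)).
    pose proof (claim2 nu h mu n Hh Hmu0) as Hc2. fold r in Hc2.
    replace (Cminus (Cmult (W h) Lv) (Cmult (RtoC h) (E nu))) with
      (Cplus (Cplus (Cmult (W h) (Cminus Lv (Tn h mu n))) (Cmult (RtoC h) (sum_n r n)))
             (Cmult (RtoC h) (Cminus (Icomp nu (INR (S n) * h)) (E nu)))).
    2:{ replace (Cmult (W h) (Cminus Lv (Tn h mu n))) with
          (Cminus (Cmult (W h) Lv) (Cmult (W h) (Tn h mu n))) by ring.
        rewrite Hc2. ring. }
    eapply Rle_trans; [apply Cmod_triangle|].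
    eapply Rle_trans; [apply Rplus_le_compat_r; apply Cmod_triangle|].
    rewrite Cmod_mult, !Cmod_hmul by lra. fold cW.
    rewrite (Cmod_sym (Icomp nu (INR (S n) * h)) (E nu)).
    pose proof (HbLv n). simpl in H.
    pose proof (HRn n).
    pose proof (E_spec nu Hnu (INR (S n) * h) ltac:(pose proof (pos_INR (S n)); nra)).
    assert (h * (12 / (INR (S n) * h + nu)) <= 12 / (INR n + 1)).
    { rewrite S_INR. pose proof (pos_INR n). unfold Rdiv.
      replace (h * (12 * / ((INR n + 1) * h + nu))) with (12 * (h / ((INR n + 1) * h + nu))) by (unfold Rdiv; ring).
      apply Rmult_le_compat_l; [lra|]. apply div_le_inv; nra. }
    assert (cW * Cmod (Cminus Lv (Tn h mu n)) <= cW * (K1 / (INR n + 1))) by (apply Rmult_le_compat_l; lra).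
    assert (h * Cmod (sum_n r n) <= h * B) by (apply Rmult_le_compat_l; lra).
    assert (h * Cmod (Cminus (E nu) (Icomp nu (INR (S n) * h))) <= h * (12 / (INR (S n) * h + nu))) by (apply Rmult_le_compat_l; lra).
    replace ((cW * K1 + 12) / (INR n + 1)) with (cW * (K1 / (INR n + 1)) + 12 / (INR n + 1)) in Hn
      by (field; pose proof (pos_INR n); lra).
    lra. }
  assert (H7 : cW * Cmod (Cminus Lv (E nu)) <= h * B + h^2 * Cmod (E nu)).
  { unfold cW. rewrite <- Cmod_mult.
    replace (Cmult (W h) (Cminus Lv (E nu))) with
      (Cplus (Cminus (Cmult (W h) Lv) (Cmult (RtoC h) (E nu))) (Cmult (Cminus (RtoC h) (W h)) (E nu))) by ring.
    eapply Rle_trans; [apply Cmod_triangle|]. rewrite Cmod_mult.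
    pose proof (Cmod_ge_0 (E nu)).
    assert (Cmod (Cminus (RtoC h) (W h)) * Cmod (E nu) <= h^2 * Cmod (E nu)) by (apply Rmult_le_compat_r; lra).
    lra. }
  apply le_div_mul in H7; [|lra].
  eapply Rle_trans; [exact H7|].
  pose proof (Cmod_ge_0 (E nu)).
  apply Rle_trans with ((h * B + h ^ 2 * Cmod (E nu)) / (h / 2)).
  { unfold Rdiv. apply Rmult_le_compat_l. nra. apply Rinv_le_contravar; lra. }
  replace ((h * B + h ^ 2 * Cmod (E nu)) / (h / 2)) with (2 * B + 2 * h * Cmod (E nu)) by (field; lra).
  unfold B.
  assert (h * (h / nu^2) <= h * (1 / nu^2)).
  { apply Rmult_le_compat_l; [lra|]. unfold Rdiv. apply Rmult_le_compat_r; [|lra].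
    left; apply Rinv_0_lt_compat; apply pow_lt; lra. }
  replace (h * (4 / nu ^ 2 + 4 / nu + 2 * Cmod (E nu))) with
    (4 * (h * (1 / nu^2)) + 4 * h / nu + 2 * h * Cmod (E nu)) by (field; lra).
  replace (2 * (2 * (h * (h / nu ^ 2)) + 2 * h / nu)) with (4 * (h * (h / nu^2)) + 4 * h / nu) by (field; lra).
  lra.
Qed.


Lemma lim_by_bound (f : R -> C) (l : C) (c : R) :
  0 <= c ->
  (exists M0, forall x, M0 < x -> Cmod (Cminus (f x) l) <= c / x) ->
  filterlim f (Rbar_locally p_infty) (locally (l : C_R_CompleteNormedModule)).
Proof.
  intros Hc [M0 HM0] P [eps HP].
  exists (Rmax (Rmax M0 1) (2 * c / eps)). intros x Hx.
  apply HP. apply Cmod_ball.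
  pose proof (Rmax_l (Rmax M0 1) (2 * c / eps)). pose proof (Rmax_r (Rmax M0 1) (2 * c / eps)).
  pose proof (Rmax_l M0 1). pose proof (Rmax_r M0 1).
  eapply Rle_lt_trans. apply HM0. lra.
  destruct eps as [e He]; simpl in *.
  apply (Rmult_lt_reg_r x). lra. unfold Rdiv. rewrite Rmult_assoc, Rinv_l, Rmult_1_r by lra.
  assert (2 * c * / e * e = 2 * c) by (field; lra).
  assert (2 * c * / e < x) by (unfold Rdiv in *; lra).
  nra.
Qed.

Definition Kc nu := 4 / nu^2 + 4 / nu + 2 * Cmod (E nu).

Lemma Kc_pos nu : 0 < nu -> 0 <= Kc nu.
Proof.
  intros. unfold Kc. pose proof (Cmod_ge_0 (E nu)).
  assert (0 < 4 / nu^2) by (apply Rdiv_lt_0_compat; [lra|apply pow_lt; lra]).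
  assert (0 < 4 / nu) by (apply Rdiv_lt_0_compat; lra). lra.
Qed.

Lemma part_a1 nu : 0 < nu ->
  filterlim (fun mu => L (nu / mu) mu) (Rbar_locally p_infty) (locally (E nu)).
Proof.
  intros Hnu. apply (lim_by_bound _ _ (nu * Kc nu)).
  { pose proof (Kc_pos nu Hnu). nra. }
  exists (1 + nu). intros x Hx.
  assert (Hh : 0 < nu / x) by (apply Rdiv_lt_0_compat; lra).
  eapply Rle_trans. apply mainA; auto.
  - apply (Rmult_le_reg_r x). lra. unfold Rdiv. rewrite Rmult_assoc, Rinv_l by lra. lra.
  - apply (Rmult_le_reg_r x). lra. unfold Rdiv. rewrite Rmult_assoc, Rinv_l by lra. nra.
  - replace (x * (nu / x)) with nu by (field; lra). lra.
  - right. fold (Kc nu). field. lra.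
Qed.

Lemma cis_m1 x : 0 <= x <= 1 -> Cmod (Cminus (cis (- x)) (RtoC 1)) <= 2 * x.
Proof.
  intros Hx. eapply Rle_trans; [apply Cmod_le_sum|]. simpl.
  pose proof (cos_bounds (- x) ltac:(lra)). pose proof (Rabs_sin_le (- x)).
  rewrite Rabs_Ropp, (Rabs_pos_eq x) in H0 by lra.
  replace (sin (- x) + - 0) with (sin (-x)) by ring. replace (cos (-x) + - (1)) with (cos (-x) - 1) by ring.
  rewrite Rabs_left1 by lra.
  assert ((-x)^2 <= x) by (simpl; nra). lra.
Qed.

Lemma part_a2 nu : 0 < nu ->
  filterlim (fun lam => Lrm (nu / lam) lam) (Rbar_locally p_infty) (locally (E nu)).
Proof.
  intros Hnu. apply (lim_by_bound _ _ (nu * (2 * Kc nu + 2 * Cmod (E nu)))).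
  { pose proof (Kc_pos nu Hnu). pose proof (Cmod_ge_0 (E nu)). nra. }
  exists (2 + 2 * nu). intros x Hx. unfold Lrm.
  assert (Hh : 0 < nu / x) by (apply Rdiv_lt_0_compat; lra).
  assert (Hh1 : 2 * (nu / x) <= 1).
  { apply (Rmult_le_reg_r x). lra. unfold Rdiv. rewrite Rmult_assoc, (Rmult_assoc nu), Rinv_l by lra. lra. }
  assert (Hh2 : 2 * (nu / x) <= nu).
  { apply (Rmult_le_reg_r x). lra. unfold Rdiv. rewrite Rmult_assoc, (Rmult_assoc nu), Rinv_l by lra. nra. }
  assert (HA := mainA nu (2 * (nu / x)) ((x - 1) / 2) Hnu ltac:(lra) Hh1 Hh2).
  replace ((x - 1) / 2 * (2 * (nu / x))) with (nu - nu / x) in HA by (field; lra).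
  specialize (HA ltac:(lra)). fold (Kc nu) in HA.
  replace (Cminus (Cmult (cis (- (nu / x))) (L (2 * (nu / x)) ((x - 1) / 2))) (E nu)) with
    (Cplus (Cmult (cis (- (nu / x))) (Cminus (L (2 * (nu / x)) ((x - 1) / 2)) (E nu)))
           (Cmult (Cminus (cis (- (nu / x))) (RtoC 1)) (E nu))) by ring.
  eapply Rle_trans; [apply Cmod_triangle|]. rewrite !Cmod_mult, Cmod_cis.
  pose proof (cis_m1 (nu / x) ltac:(lra)). pose proof (Cmod_ge_0 (E nu)).
  pose proof (Kc_pos nu Hnu).
  assert (Cmod (Cminus (cis (- (nu / x))) 1) * Cmod (E nu) <= 2 * (nu / x) * Cmod (E nu)) by (apply Rmult_le_compat_r; lra).
  replace (nu * (2 * Kc nu + 2 * Cmod (E nu)) / x) with (2 * (nu / x) * Kc nu + 2 * (nu / x) * Cmod (E nu)) by (field; lra).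
  nra.
Qed.


Lemma real_compare (g f : R -> R) a b Ig If M : a <= b ->
  is_RInt g a b Ig -> is_RInt f a b If ->
  (forall x, a <= x <= b -> Rabs (g x - f x) <= M) -> Rabs (Ig - If) <= (b - a) * M.
Proof.
  intros Hab Hg Hf HM.
  assert (H := is_RInt_minus _ _ _ _ _ _ Hg Hf).
  apply (norm_RInt_le_const (V:=R_NormedModule) (fun y => minus (g y) (f y)) a b _ M Hab); [|exact H].
  intros x Hx. apply HM; auto.
Qed.

Lemma cos_small x : 0 <= x <= 1/2 -> 1/2 <= cos x /\ Rabs (1 / cos x - 1) <= x.
Proof.
  intros Hx. pose proof (cos_bounds x ltac:(lra)) as [H1 H2].
  assert (x^2 <= x/2) by (simpl; nra).
  split; [lra|].
  replace (1 / cos x - 1) with ((1 - cos x) / cos x) by (field; lra).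
  rewrite Rabs_pos_eq. 2:{ apply Rdiv_le_0_compat; lra. }
  apply (Rmult_le_reg_r (cos x)). lra. unfold Rdiv. rewrite Rmult_assoc, Rinv_l, Rmult_1_r by lra.
  nra.
Qed.

Definition gre lam y := cos y / cos (y / lam).
Definition gim lam y := sin y / cos (y / lam).

Lemma part_c nu : 0 < nu ->
  filterlim (fun lam => Cmult (RtoC lam) (Eci (nu / lam) lam)) (Rbar_locally p_infty)
    (locally (Cmult Ci (Cminus (RtoC 1) (cis nu)))).
Proof.
  intros Hnu. apply (lim_by_bound _ _ (2 * nu^2)). { nra. }
  exists (2 * nu + 2). intros lam Hlam.
  assert (Hr : 0 < nu / lam <= 1/2).
  { split. apply Rdiv_lt_0_compat; lra.
    apply (Rmult_le_reg_r lam). lra. unfold Rdiv. rewrite Rmult_assoc, Rinv_l by lra. lra. }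
  assert (Hcos : forall y, 0 <= y <= nu -> 1/2 <= cos (y / lam) /\ Rabs (1 / cos (y / lam) - 1) <= nu / lam).
  { intros y Hy.
    assert (0 <= y / lam <= nu / lam).
    { split. apply Rdiv_le_0_compat; lra. unfold Rdiv. apply Rmult_le_compat_r; [|lra].
      left; apply Rinv_0_lt_compat; lra. }
    destruct (cos_small (y / lam)) as [A B]; [lra|]. split; lra. }
  assert (Hcont : forall (p : R -> R), (forall y, ex_derive p y) -> forall y, 0 <= y <= nu ->
            continuous (fun u => p u / cos (u / lam)) y).
  { intros p Hp y Hy. apply (ex_derive_continuous (V:=R_NormedModule) (fun u => p u / cos (u / lam))).
    auto_derive. pose proof (Hcos y Hy). repeat split; auto; lra. }
  assert (Hex : forall (p : R -> R), (forall y, ex_derive p y) -> ex_RInt (fun u => p u / cos (u / lam)) 0 nu).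
  { intros p Hp. apply (ex_RInt_continuous (V:=R_CompleteNormedModule)). intros z Hz.
    unfold Rmin, Rmax in Hz. destruct (Rle_dec 0 nu); try lra. apply Hcont; auto. }
  set (l := (RInt (gre lam) 0 nu, RInt (gim lam) 0 nu) : C).
  assert (Hl : is_RInt (V:=C_R_NormedModule) (fun y => (gre lam y, gim lam y)) 0 nu l).
  { apply (is_RInt_fct_extend_pair (U:=R_NormedModule) (V:=R_NormedModule)); simpl;
    apply (RInt_correct (V:=R_CompleteNormedModule)); unfold gre, gim; apply Hex; auto using exd_cos, exd_sin. }
  assert (Hl2 := is_RInt_comp_lin (V:=C_R_NormedModule) (fun y => (gre lam y, gim lam y)) lam 0 0 (nu / lam) l).
  replace (lam * 0 + 0) with 0 in Hl2 by ring.
  replace (lam * (nu / lam) + 0) with nu in Hl2 by (field; lra).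
  specialize (Hl2 Hl).
  assert (Hl3 := is_RInt_scal _ _ _ (/ lam) _ Hl2).
  assert (HE : Eci (nu / lam) lam = scal (/ lam) l).
  { unfold Eci. apply (is_RInt_unique (V:=C_R_CompleteNormedModule)).
    eapply (is_RInt_ext (V:=C_R_NormedModule)); [|exact Hl3].
    intros t Ht. unfold Rmin, Rmax in Ht. destruct (Rle_dec 0 (nu / lam)); try lra.
    assert (0 < cos t).
    { assert (0 <= t <= 1/2) by lra. pose proof (cos_bounds t ltac:(lra)). nra. }
    rewrite Cdiv_RtoC by lra.
    unfold gre, gim, scal; simpl. unfold prod_scal; simpl. unfold scal; simpl. unfold mult; simpl.
    replace ((lam * t + 0) / lam) with t by (field; lra).
    replace (lam * t + 0) with (t * lam) by ring.
    f_equal; field; lra. }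
  rewrite HE.
  replace (Cmult (RtoC lam) (scal (/ lam) l)) with l.
  2:{ unfold l, scal; simpl. unfold prod_scal; simpl. unfold scal; simpl. unfold mult; simpl.
      assert (HH : forall p q : R, (p, q) = (lam * (/ lam * p) - 0 * (/ lam * q), lam * (/ lam * q) + 0 * (/ lam * p))) by (intros; f_equal; field; lra). apply HH. }
  replace (Cmult Ci (Cminus (RtoC 1) (cis nu))) with ((sin nu, 1 - cos nu) : C).
  2:{ unfold Cmult, Cminus, Cplus, Copp, Ci, RtoC, cis; simpl. f_equal; ring. }
  eapply Rle_trans; [apply Cmod_le_sum|]. unfold l; simpl.
  assert (Hs : is_RInt cos 0 nu (sin nu)).
  { replace (sin nu) with (minus (sin nu) (sin 0)) by (rewrite sin_0; unfold minus, plus, opp; simpl; ring).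
    apply (is_RInt_derive (V:=R_CompleteNormedModule) sin cos).
    intros; auto_derive; auto; ring. intros; apply (ex_derive_continuous (V:=R_NormedModule) cos); apply exd_cos. }
  assert (Hc : is_RInt sin 0 nu (1 - cos nu)).
  { replace (1 - cos nu) with (minus (- cos nu) (- cos 0)) by (rewrite cos_0; unfold minus, plus, opp; simpl; ring).
    apply (is_RInt_derive (V:=R_CompleteNormedModule) (fun x => - cos x) sin).
    intros; auto_derive; auto; ring. intros; apply (ex_derive_continuous (V:=R_NormedModule) sin); apply exd_sin. }
  assert (B1 : Rabs (RInt (gre lam) 0 nu - sin nu) <= (nu - 0) * (nu / lam)).
  { apply (real_compare (gre lam) cos); try lra; auto.
    apply (RInt_correct (V:=R_CompleteNormedModule)). apply Hex, exd_cos.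
    intros x Hx. unfold gre. destruct (Hcos x Hx) as [A B].
    replace (cos x / cos (x / lam) - cos x) with (cos x * (1 / cos (x / lam) - 1)) by (field; lra).
    rewrite Rabs_mult. assert (Rabs (cos x) <= 1) by (apply Rabs_le; apply COS_bound). pose proof (Rabs_pos (cos x)).
    pose proof (Rabs_pos (1 / cos (x / lam) - 1)). nra. }
  assert (B2 : Rabs (RInt (gim lam) 0 nu - (1 - cos nu)) <= (nu - 0) * (nu / lam)).
  { apply (real_compare (gim lam) sin); try lra; auto.
    apply (RInt_correct (V:=R_CompleteNormedModule)). apply Hex, exd_sin.
    intros x Hx. unfold gim. destruct (Hcos x Hx) as [A B].
    replace (sin x / cos (x / lam) - sin x) with (sin x * (1 / cos (x / lam) - 1)) by (field; lra).
    rewrite Rabs_mult. assert (Rabs (sin x) <= 1) by (apply Rabs_le; apply SIN_bound). pose proof (Rabs_pos (sin x)).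
    pose proof (Rabs_pos (1 / cos (x / lam) - 1)). nra. }
  replace (2 * nu ^ 2 / lam) with ((nu - 0) * (nu / lam) + (nu - 0) * (nu / lam)) by (field; lra).
  unfold Rminus in *. lra.
Qed.


Definition sinc (y : R) : R := if Req_EM_T y 0 then 1 else sin y / y.

Lemma sinc_cont y : continuous sinc y.
Proof.
  destruct (Req_EM_T y 0) as [->|Hy].
  - intros P [eps HP].
    destruct (derivable_pt_lim_sin 0 eps (cond_pos eps)) as [d Hd].
    exists d. intros z Hz. apply HP.
    change (Rabs (sinc z - sinc 0) < eps). change (Rabs (z - 0) < d) in Hz.
    unfold sinc. destruct (Req_EM_T 0 0); [|congruence].
    destruct (Req_EM_T z 0) as [->|Hz0].
    + replace (1 - 1) with 0 by ring. rewrite Rabs_R0. apply cond_pos.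
    + specialize (Hd z Hz0 ltac:(rewrite Rminus_0_r in Hz; exact Hz)).
      rewrite Rplus_0_l, sin_0, cos_0, Rminus_0_r in Hd. exact Hd.
  - apply (continuous_ext_loc sinc (fun u => sin u / u) y).
    + assert (Hp : 0 < Rabs y) by (apply Rabs_pos_lt; auto).
      exists (mkposreal _ Hp). intros z Hz. change (Rabs (z - y) < Rabs y) in Hz.
      unfold sinc. destruct (Req_EM_T z 0) as [->|]; auto.
      rewrite Rminus_0_l, Rabs_Ropp in Hz. lra.
    + apply (ex_derive_continuous (V:=R_NormedModule) (fun u => sin u / u)). auto_derive. auto.
Qed.

Lemma sinc_bounds x : 0 <= x <= 1 -> 1 - x^2/6 <= sinc x <= 1.
Proof.
  intros Hx. unfold sinc. destruct (Req_EM_T x 0) as [->|Hx0].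
  - simpl. lra.
  - pose proof (sin_bounds x Hx). assert (0 < x) by lra.
    split.
    + apply (Rmult_le_reg_r x); auto. unfold Rdiv. rewrite Rmult_assoc, Rinv_l, Rmult_1_r by lra.
      simpl in *. nra.
    + apply (Rmult_le_reg_r x); auto. unfold Rdiv. rewrite Rmult_assoc, Rinv_l, Rmult_1_r by lra. lra.
Qed.

Lemma sinc_abs y : Rabs (sinc y) <= 1.
Proof.
  unfold sinc. destruct (Req_EM_T y 0). rewrite Rabs_R1; lra.
  unfold Rdiv. rewrite Rabs_mult, Rabs_inv. pose proof (Rabs_sin_le y).
  assert (0 < Rabs y) by (apply Rabs_pos_lt; auto).
  apply (Rmult_le_reg_r (Rabs y)); auto. rewrite Rmult_assoc, Rinv_l, Rmult_1_r by lra. lra.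
Qed.

Lemma lim_by_bound_R (f : R -> R) (l : R) (c : R) :
  0 <= c ->
  (exists M0, forall x, M0 < x -> Rabs (f x - l) <= c / x) ->
  filterlim f (Rbar_locally p_infty) (locally l).
Proof.
  intros Hc [M0 HM0] P [eps HP].
  exists (Rmax (Rmax M0 1) (2 * c / eps)). intros x Hx.
  apply HP. change (Rabs (f x - l) < eps).
  pose proof (Rmax_l (Rmax M0 1) (2 * c / eps)). pose proof (Rmax_r (Rmax M0 1) (2 * c / eps)).
  pose proof (Rmax_l M0 1). pose proof (Rmax_r M0 1).
  eapply Rle_lt_trans. apply HM0. lra.
  destruct eps as [e He]; simpl in *.
  apply (Rmult_lt_reg_r x). lra. unfold Rdiv. rewrite Rmult_assoc, Rinv_l, Rmult_1_r by lra.
  assert (2 * c * / e * e = 2 * c) by (field; lra).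
  assert (2 * c * / e < x) by (unfold Rdiv in *; lra).
  nra.
Qed.

Lemma part_b nu : 0 < nu ->
  filterlim (fun lam => Ssi (nu / lam) lam) (Rbar_locally p_infty) (locally (Si nu)).
Proof.
  intros Hnu. apply (lim_by_bound_R _ _ (nu^2)). { nra. }
  exists (nu + 1). intros lam Hlam.
  assert (Hr : 0 < nu / lam <= 1).
  { split. apply Rdiv_lt_0_compat; lra.
    apply (Rmult_le_reg_r lam). lra. unfold Rdiv. rewrite Rmult_assoc, Rinv_l by lra. lra. }
  assert (Hx : forall y, 0 <= y <= nu -> 0 <= y / lam <= nu / lam).
  { intros y Hy. split. apply Rdiv_le_0_compat; lra. unfold Rdiv. apply Rmult_le_compat_r; [|lra].
    left; apply Rinv_0_lt_compat; lra. }
  set (g := fun y => sinc y / sinc (y / lam)).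
  assert (Hg : ex_RInt g 0 nu).
  { apply (ex_RInt_continuous (V:=R_CompleteNormedModule)). intros z Hz.
    unfold Rmin, Rmax in Hz. destruct (Rle_dec 0 nu); try lra.
    pose proof (sinc_bounds (z / lam) ltac:(pose proof (Hx z Hz); lra)).
    assert (0 <= (z/lam)^2 <= 1) by (pose proof (Hx z Hz); simpl; nra).
    apply (continuous_mult (K:=R_AbsRing) sinc (fun y => / sinc (y / lam))).
    apply sinc_cont.
    apply continuous_Rinv_comp; [|lra].
    apply (continuous_comp (fun y => y / lam) sinc).
    apply (ex_derive_continuous (V:=R_NormedModule) (fun y => y / lam)). auto_derive. lra.
    apply sinc_cont. }
  assert (Hs : ex_RInt sinc 0 nu).
  { apply (ex_RInt_continuous (V:=R_CompleteNormedModule)). intros; apply sinc_cont. }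
  assert (HSi : Si nu = RInt sinc 0 nu).
  { unfold Si. apply (is_RInt_unique (V:=R_CompleteNormedModule)).
    eapply (is_RInt_ext (V:=R_NormedModule)); [|apply (RInt_correct (V:=R_CompleteNormedModule)); exact Hs].
    intros x Hx0. unfold Rmin, Rmax in Hx0. destruct (Rle_dec 0 nu); try lra.
    unfold sinc. destruct (Req_EM_T x 0); [lra|reflexivity]. }
  assert (HSsi : Ssi (nu / lam) lam = RInt g 0 nu).
  { unfold Ssi. apply (is_RInt_unique (V:=R_CompleteNormedModule)).
    assert (H1 := is_RInt_comp_lin (V:=R_NormedModule) g lam 0 0 (nu / lam) (RInt g 0 nu)).
    replace (lam * 0 + 0) with 0 in H1 by ring.
    replace (lam * (nu / lam) + 0) with nu in H1 by (field; lra).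
    specialize (H1 (RInt_correct (V:=R_CompleteNormedModule) _ _ _ Hg)).
    eapply (is_RInt_ext (V:=R_NormedModule)); [|exact H1].
    intros t Ht. unfold Rmin, Rmax in Ht. destruct (Rle_dec 0 (nu / lam)); try lra.
    unfold g, scal; simpl. unfold mult; simpl.
    replace ((lam * t + 0) / lam) with t by (field; lra).
    replace (lam * t + 0) with (lam * t) by ring.
    pose proof (sin_bounds t ltac:(lra)).
    assert (0 < sin t) by (simpl in *; nra).
    unfold sinc. destruct (Req_EM_T (lam * t) 0). { nra. }
    destruct (Req_EM_T t 0). { lra. }
    field. repeat split; lra. }
  rewrite HSi, HSsi.
  replace (nu ^ 2 / lam) with ((nu - 0) * (nu / lam)) by (field; lra).
  apply (real_compare g sinc); try lra.
  apply (RInt_correct (V:=R_CompleteNormedModule)); auto.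
  apply (RInt_correct (V:=R_CompleteNormedModule)); auto.
  intros y Hy. unfold g.
  pose proof (Hx y Hy). pose proof (sinc_bounds (y / lam) ltac:(lra)).
  set (x := y / lam) in *. set (s := sinc x) in *.
  assert (x^2 <= x) by (simpl; nra).
  replace (sinc y / s - sinc y) with (sinc y * ((1 - s) / s)) by (field; lra).
  rewrite Rabs_mult. pose proof (sinc_abs y).
  rewrite (Rabs_pos_eq ((1 - s) / s)) by (apply Rdiv_le_0_compat; lra).
  assert ((1 - s) / s <= nu / lam).
  { apply (Rmult_le_reg_r s). lra. unfold Rdiv. rewrite Rmult_assoc, Rinv_l, Rmult_1_r by lra.
    nra. }
  pose proof (Rabs_pos (sinc y)). assert (0 <= (1 - s) / s) by (apply Rdiv_le_0_compat; lra).
  nra.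
Qed.


Theorem proposition6 (nu : R) (Hnu : 0 < nu) :
  (filterlim (fun mu => L (nu / mu) mu) (Rbar_locally p_infty) (locally (E nu)) /\
   filterlim (fun lam => Lrm (nu / lam) lam) (Rbar_locally p_infty) (locally (E nu))) /\
  filterlim (fun lam => Ssi (nu / lam) lam) (Rbar_locally p_infty) (locally (Si nu)) /\
  filterlim (fun lam => Cmult (RtoC lam) (Eci (nu / lam) lam)) (Rbar_locally p_infty)
    (locally (Cmult Ci (Cminus (RtoC 1) (cis nu)))).
Proof.
  split; [split|split].
  - apply part_a1; auto.
  - apply part_a2; auto.
  - apply part_b; auto.
  - apply part_c; auto.
Qed.
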